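(* Let $n,m,d,k$ be positive integers with $k\le 2^{m-1}$, and let $N=2^n$ (with $N$ large and $d,k\le\sqrt N$). Consider the following decision problem. For a function $f:\{0,1\}^n\to\{0,1\}^m$, let $F=f^{\otimes d}:\{0,1\}^{dn}\to\{0,1\}^{dm}$ be given by $F(x_1,\dots,x_d)=(f(x_1),\dots,f(x_d))$. The algorithm is given access to $F$ only through the oracle unitary $T_F$ acting on $(dn+dm)$ qubits by $T_F\ket{x}\ket{z}=\ket{x}\ket{z\oplus F(x)}$ for $x\in\{0,1\}^{dn}$, $z\in\{0,1\}^{dm}$. It is also given $k$ distinct items $y_1,\dots,y_k\in\{0,1\}^m$. It is promised that either all of the $y_i$ lie in the image of $f$, or exactly $k-1$ of them do, and it must decide (correctly with probability at least $3/4$) whether all $y_i$ lie in the image of $f$. Then every quantum circuit solving this problem uses \[\Omega\left(\sqrt{\frac{Nk}{d\min\{d,k\}}}\right)\] applications of $T_F$.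
   Context: An item $y\in\{0,1\}^m$ is ''in the database $f$'' if $f(x)=y$ for some $x\in\{0,1\}^n$. Note that $T_F=T_f^{\otimes d}$ up to reordering of qubits, where $T_f\ket{x}\ket{z}=\ket{x}\ket{z\oplus f(x)}$; thus one application of $T_F$ is a parallel query to $d$ copies of the database $f$. The complexity measure is the number of applications of $T_F$; other unitaries (independent of $f$) are free. *)

(* Defs.v *)
From mathcomp Require Import all_boot all_order all_algebra.
From mathcomp Require Import complex Rstruct.
Set Implicit Arguments. Unset Strict Implicit. Unset Printing Implicit Defensive.
Import Order.TTheory GRing.Theory Num.Theory.
Local Open Scope ring_scope.

Definition R := Rdefinitions.R.
Definition C := (Rdefinitions.R)[i].

Definition bits (n : nat) := (n.-tuple bool)%type.

Definition xor_bits m (u v : bits m) : bits m := [tuple xorb (tnth u i) (tnth v i) | i < m].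
Definition xor_blocks d m (u v : d.-tuple (bits m)) : d.-tuple (bits m) :=
  [tuple xor_bits (tnth u i) (tnth v i) | i < d].

Definition Fpar d n m (f : bits n -> bits m) (x : d.-tuple (bits n)) : d.-tuple (bits m) :=
  [tuple f (tnth x i) | i < d].

(* computational basis of the whole register: query input x (dn qubits),
   query output z (dm qubits), workspace a (w qubits) *)
Definition basis n m d w := ((d.-tuple (bits n) * d.-tuple (bits m)) * bits w)%type.

(* linear operators on C^basis, given by their matrix entries U b' b *)
Definition op (B : finType) := B -> B -> C.
Definition state (B : finType) := B -> C.

Definition apply (B : finType) (U : op B) (psi : state B) : state B :=
  fun b => \sum_(a : B) U b a * psi a.

Definition unitary (B : finType) (U : op B) : Prop :=
  forall a a' : B, \sum_(b : B) (U b a)^* * U b a' = (a == a')%:R.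

Definition oracle n m d w (f : bits n -> bits m) : op (basis n m d w) :=
  fun b' b => (b' == ((b.1.1, xor_blocks b.1.2 (Fpar f b.1.1)), b.2))%:R.

Definition zero_basis n m d w : basis n m d w :=
  (([tuple [tuple false | _ < n] | _ < d], [tuple [tuple false | _ < m] | _ < d]),
   [tuple false | _ < w]).

Definition init n m d w : state (basis n m d w) :=
  fun b => (b == zero_basis n m d w)%:R.

Fixpoint run n m d w (f : bits n -> bits m) (U : nat -> op (basis n m d w)) (j : nat)
  : state (basis n m d w) :=
  match j with
  | 0 => apply (U 0%N) (@init n m d w)
  | j'.+1 => apply (U j) (apply (@oracle n m d w f) (run f U j'))
  end.

Definition normsq (z : C) : R := (complex.Re z) ^+ 2 + (complex.Im z) ^+ 2.

(* probability of accepting: measure in the computational basis and accept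
   iff the outcome satisfies the (arbitrary) predicate out *)
Definition acc_prob n m d w (f : bits n -> bits m) (U : nat -> op (basis n m d w))
  (t : nat) (out : pred (basis n m d w)) : R :=
  \sum_(b : basis n m d w | out b) normsq (run f U t b).

Definition in_image n m (f : bits n -> bits m) (y : bits m) : bool :=
  [exists x : bits n, f x == y].

(* Main.v *)
Require Import Defs.
From mathcomp Require Import all_boot all_order all_algebra.
From mathcomp Require Import complex Rstruct.
From mathcomp Require Import ring lra zify.
Set Implicit Arguments. Unset Strict Implicit. Unset Printing Implicit Defensive.
Import Order.TTheory GRing.Theory Num.Theory.
Local Open Scope ring_scope.

Definition dotc (a c : C) : R := complex.Re a * complex.Re c + complex.Im a * complex.Im c.
Lemma Re_conjM (a c : C) : complex.Re (a^* * c) = dotc a c.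
Proof. case: a => a1 a2; case: c => c1 c2 /=. rewrite /dotc /=. ring. Qed.
Lemma Re_add (a c : C) : complex.Re (a + c) = complex.Re a + complex.Re c.
Proof. by case: a; case: c. Qed.
Lemma Re_sum (I : finType) (F : I -> C) : complex.Re (\sum_i F i) = \sum_i complex.Re (F i).
Proof. elim/big_rec2: _ => //= i x y _ <-; exact: Re_add. Qed.
Definition ip (B : finType) (u v : state B) : C := \sum_b (u b)^* * v b.
Definition dot (B : finType) (u v : state B) : R := \sum_b dotc (u b) (v b).
Lemma dotE (B : finType) (u v : state B) : dot u v = complex.Re (ip u v).
Proof. by rewrite /ip Re_sum; apply: eq_bigr => b _; rewrite Re_conjM. Qed.

Lemma unitary_ip (B : finType) (U : op B) u v : unitary U ->
  ip (apply U u) (apply U v) = ip u v.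
Proof.
move=> HU; rewrite /ip /apply.
transitivity (\sum_b \sum_a \sum_a' ((u a)^* * v a') * ((U b a)^* * U b a')).
  apply: eq_bigr => b _; rewrite rmorph_sum mulr_suml; apply: eq_bigr => a _.
  rewrite mulr_sumr; apply: eq_bigr => a' _; rewrite rmorphM; ring.
rewrite exchange_big; apply: eq_bigr => a _ /=.
rewrite exchange_big /=.
transitivity (\sum_a' ((u a)^* * v a') * (a == a')%:R).
  by apply: eq_bigr => a' _; rewrite -mulr_sumr HU.
rewrite (bigD1 a) //= big1 ?addr0; first by rewrite eqxx mulr1.
by move=> a' Ha'; rewrite eq_sym (negbTE Ha') mulr0.
Qed.

Lemma dot_unitary (B : finType) (U : op B) u v : unitary U ->
  dot (apply U u) (apply U v) = dot u v.
Proof. by move=> HU; rewrite !dotE unitary_ip. Qed.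

Lemma xor_bitsK m (u v : bits m) : xor_bits (xor_bits u v) v = u.
Proof.
apply: eq_from_tnth => i; rewrite !tnth_mktuple.
by case: (tnth u i); case: (tnth v i).
Qed.

Lemma xor_blocksK d m (u v : d.-tuple (bits m)) : xor_blocks (xor_blocks u v) v = u.
Proof. apply: eq_from_tnth => i; rewrite !tnth_mktuple; exact: xor_bitsK. Qed.

Section Oracle.
Variables (n m d w : nat).
Local Notation B := (basis n m d w).

Definition Tf (f : bits n -> bits m) (b : B) : B :=
  ((b.1.1, xor_blocks b.1.2 (Fpar f b.1.1)), b.2).

Lemma TfK f : involutive (Tf f).
Proof. by case=> [[x z] a]; rewrite /Tf /= xor_blocksK. Qed.

Lemma oracleE f b b' : @oracle n m d w f b' b = (b' == Tf f b)%:R.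
Proof. by []. Qed.

Lemma apply_oracle f (u : state B) b : apply (@oracle n m d w f) u b = u (Tf f b).
Proof.
rewrite /apply (reindex_inj (inv_inj (TfK f))) /=.
rewrite (bigD1 b) //= big1 ?addr0.
  by rewrite oracleE TfK eqxx mul1r.
by move=> a Ha; rewrite oracleE TfK eq_sym (negbTE Ha) mul0r.
Qed.

Lemma unitary_oracle f : unitary (@oracle n m d w f).
Proof.
move=> a a'; rewrite (bigD1 (Tf f a)) //= big1 ?addr0.
  rewrite !oracleE.
  have -> : (Tf f a == Tf f a) = true by apply/eqP.
  have -> : (Tf f a == Tf f a') = (a == a').
    by apply/eqP/eqP => [/(can_inj (TfK f))|->].
  by case: (a == a'); rewrite ?rmorph1 ?rmorph0 ?mul1r ?mul0r.
by move=> b Hb; rewrite oracleE (negbTE Hb) rmorph0 mul0r.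
Qed.
End Oracle.

Lemma normsq_ge0 (a : C) : 0 <= normsq a.
Proof. by rewrite /normsq addr_ge0 // sqr_ge0. Qed.

Lemma amgm (a c : C) (lam : R) : 0 < lam ->
  - ((lam * normsq a + normsq c / lam) / 2) <= dotc a c /\
  dotc a c <= (lam * normsq a + normsq c / lam) / 2.
Proof.
move=> Hl; rewrite /dotc /normsq.
set a1 := complex.Re a; set a2 := complex.Im a.
set c1 := complex.Re c; set c2 := complex.Im c.
have Hl0 : lam != 0 by rewrite gt_eqF.
have E1 : (lam * (a1 ^+ 2 + a2 ^+ 2) + (c1 ^+ 2 + c2 ^+ 2) / lam) / 2 + (a1 * c1 + a2 * c2)
   = ((lam * a1 + c1) ^+ 2 + (lam * a2 + c2) ^+ 2) / (2 * lam) by field.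
have E2 : (lam * (a1 ^+ 2 + a2 ^+ 2) + (c1 ^+ 2 + c2 ^+ 2) / lam) / 2 - (a1 * c1 + a2 * c2)
   = ((lam * a1 - c1) ^+ 2 + (lam * a2 - c2) ^+ 2) / (2 * lam) by field.
have P1 : 0 <= ((lam * a1 + c1) ^+ 2 + (lam * a2 + c2) ^+ 2) / (2 * lam).
  by rewrite divr_ge0 ?addr_ge0 ?sqr_ge0 // mulr_ge0 // ltW.
have P2 : 0 <= ((lam * a1 - c1) ^+ 2 + (lam * a2 - c2) ^+ 2) / (2 * lam).
  by rewrite divr_ge0 ?addr_ge0 ?sqr_ge0 // mulr_ge0 // ltW.
split; lra.
Qed.

Section Step.
Variables (n m d w : nat).
Local Notation B := (basis n m d w).

Definition Dif (f g : bits n -> bits m) (b : B) : bool := Fpar f b.1.1 != Fpar g b.1.1.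

Lemma oracle_step f g (u v : state B) lam : 0 < lam ->
  dot u v - (lam * \sum_(b | Dif f g b) normsq (u b) + (\sum_(b | Dif f g b) normsq (v b)) / lam)
  <= dot (apply (@oracle n m d w f) u) (apply (@oracle n m d w g) v).
Proof.
move=> Hl.
pose pi := fun b : B => Tf g (Tf f b).
have Hpi : forall b, ~~ Dif f g b -> pi b = b.
  move=> [[x z] a]; rewrite /Dif /pi /Tf /= negbK => /eqP ->.
  by rewrite xor_blocksK.
have pi_inj : injective pi.
  by move=> b1 b2; rewrite /pi => /(can_inj (TfK g)) /(can_inj (TfK f)).
have Dpi : forall b, Dif f g (pi b) = Dif f g b by case=> [[x z] a].
have E : dot (apply (oracle f) u) (apply (oracle g) v) = \sum_b dotc (u b) (v (pi b)).
  rewrite /dot (reindex_inj (inv_inj (TfK f))) /=.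
  by apply: eq_bigr => b _; rewrite !apply_oracle TfK.
have Q : \sum_(b | Dif f g b) normsq (v (pi b)) = \sum_(b | Dif f g b) normsq (v b).
  rewrite [RHS](reindex_inj pi_inj) /=.
  by apply: eq_bigl => b; rewrite Dpi.
rewrite E.
have L : forall b, dotc (u b) (v b) - (Dif f g b)%:R * (lam * normsq (u b) +
            (normsq (v (pi b)) + normsq (v b)) / (2 * lam)) <= dotc (u b) (v (pi b)).
  move=> b; case: (boolP (Dif f g b)) => Hb.
    have [H1 _] := amgm (u b) (v (pi b)) Hl.
    have [_ H2] := amgm (u b) (v b) Hl.
    have Hl0 : lam != 0 by rewrite gt_eqF.
    have -> : (normsq (v (pi b)) + normsq (v b)) / (2 * lam) =
        normsq (v (pi b)) / lam / 2 + normsq (v b) / lam / 2 by field.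
    rewrite mul1r; lra.
  by rewrite mul0r subr0 Hpi.
apply: le_trans (ler_sum _ (fun b _ => L b)).
rewrite sumrB /dot lerD2l lerN2.
rewrite (bigID (Dif f g)) /= [X in _ + X]big1 ?addr0; last by move=> b /negbTE ->; rewrite mul0r.
rewrite (eq_bigr (fun b => lam * normsq (u b) + (normsq (v (pi b)) + normsq (v b)) / (2 * lam)));
  last by move=> b ->; rewrite mul1r.
rewrite big_split /= -mulr_sumr -mulr_suml [X in X / (2 * lam)]big_split /= Q.
have Hl0 : lam != 0 by rewrite gt_eqF.
set s := \sum_(b | _) normsq (v b).
have -> : (s + s) / (2 * lam) = s / lam by field.
by [].
Qed.
End Step.

Lemma sum_normsq_ge0 (B : finType) (P : pred B) (u : state B) :
  0 <= \sum_(b | P b) normsq (u b).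
Proof. by apply: sumr_ge0 => b _; apply: normsq_ge0. Qed.

Lemma dot_sym (B : finType) (u v : state B) : dot u v = dot v u.
Proof. by apply: eq_bigr => b _; rewrite /dotc mulrC [complex.Im _ * _]mulrC. Qed.

Lemma dotcc (a : C) : dotc a a = normsq a.
Proof. by rewrite /dotc /normsq !expr2. Qed.

Lemma final_sep (B : finType) (u v : state B) (out : pred B) :
  dot u u = 1 -> dot v v = 1 ->
  3 / 4 <= \sum_(b | out b) normsq (u b) ->
  \sum_(b | out b) normsq (v b) <= 1 / 4 ->
  dot u v <= 1 - 1 / 32.
Proof.
move=> Hu Hv Hacc Hrej.
pose h (b : B) := 4 * (normsq (u b) + normsq (v b) - 2 * dotc (u b) (v b)) +
                  (normsq (u b) + normsq (v b) + 2 * dotc (u b) (v b)) / 16.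
have Hh : forall b, normsq (u b) - normsq (v b) <= h b /\ 0 <= h b.
  move=> b; rewrite /h /normsq /dotc.
  set a1 := complex.Re (u b); set a2 := complex.Im (u b).
  set c1 := complex.Re (v b); set c2 := complex.Im (v b).
  have E1 : 4 * (a1 ^+ 2 + a2 ^+ 2 + (c1 ^+ 2 + c2 ^+ 2) - 2 * (a1 * c1 + a2 * c2)) +
    (a1 ^+ 2 + a2 ^+ 2 + (c1 ^+ 2 + c2 ^+ 2) + 2 * (a1 * c1 + a2 * c2)) / 16
    - (a1 ^+ 2 + a2 ^+ 2 - (c1 ^+ 2 + c2 ^+ 2))
    = (2 * (a1 - c1) - (a1 + c1) / 4) ^+ 2 + (2 * (a2 - c2) - (a2 + c2) / 4) ^+ 2.
    by field.
  have E2 : 4 * (a1 ^+ 2 + a2 ^+ 2 + (c1 ^+ 2 + c2 ^+ 2) - 2 * (a1 * c1 + a2 * c2)) +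
    (a1 ^+ 2 + a2 ^+ 2 + (c1 ^+ 2 + c2 ^+ 2) + 2 * (a1 * c1 + a2 * c2)) / 16
    = 4 * ((a1 - c1) ^+ 2 + (a2 - c2) ^+ 2) + ((a1 + c1) ^+ 2 + (a2 + c2) ^+ 2) / 16.
    by field.
  have S1 : 0 <= (2 * (a1 - c1) - (a1 + c1) / 4) ^+ 2 + (2 * (a2 - c2) - (a2 + c2) / 4) ^+ 2.
    by rewrite addr_ge0 ?sqr_ge0.
  have S2 : 0 <= 4 * ((a1 - c1) ^+ 2 + (a2 - c2) ^+ 2) + ((a1 + c1) ^+ 2 + (a2 + c2) ^+ 2) / 16.
    have := sqr_ge0 (a1 - c1); have := sqr_ge0 (a2 - c2); have := sqr_ge0 (a1 + c1); have := sqr_ge0 (a2 + c2); lra.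
  split; lra.
have Hs : dot u v <= 1.
  have : dot u v <= (dot u u + dot v v) / 2.
    rewrite /dot -big_split /= mulr_suml; apply: ler_sum => b _.
    have [_ H] := amgm (u b) (v b) ltr01.
    by move: H; rewrite mul1r divr1 !dotcc.
  by rewrite Hu Hv; lra.
have S : \sum_(b | out b) normsq (u b) - \sum_(b | out b) normsq (v b) <= \sum_b h b.
  rewrite -sumrB; apply: le_trans (_ : \sum_(b | out b) h b <= _).
    by apply: ler_sum => b _; case: (Hh b).
  rewrite [X in _ <= X](bigID out) /= lerDl.
  by apply: sumr_ge0 => b _; case: (Hh b).
have Nuu : \sum_b normsq (u b) = dot u u by apply: eq_bigr => b _; rewrite dotcc.
have Nvv : \sum_b normsq (v b) = dot v v by apply: eq_bigr => b _; rewrite dotcc.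
have E : \sum_b h b = (4 + 1/16) * (\sum_b normsq (u b)) + (4 + 1/16) * (\sum_b normsq (v b))
     + (2/16 - 8) * (\sum_b dotc (u b) (v b)).
  rewrite !mulr_sumr -!big_split /=; by apply: eq_bigr => b _; rewrite /h; field.
rewrite Nuu Nvv in E; change (\sum_b dotc (u b) (v b)) with (dot u v) in E.
rewrite E Hu Hv in S.
lra.
Qed.

Section Adversary.
Variables (n m d w : nat).
Local Notation B := (basis n m d w).
Local Notation T := {ffun bits n -> bits m}.

Lemma dot_init : dot (@init n m d w) (@init n m d w) = 1.
Proof.
rewrite /dot (bigD1 (zero_basis n m d w)) //= big1 ?addr0.
  by rewrite /init eqxx dotcc /normsq /=; rewrite expr0n /= expr1n addr0.
by move=> b Hb; rewrite /init (negbTE Hb) dotcc /normsq /= expr0n /= addr0.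
Qed.

Lemma run_norm (U : nat -> op B) t (f : bits n -> bits m) :
  (forall i, (i <= t)%N -> unitary (U i)) ->
  forall j, (j <= t)%N -> dot (run f U j) (run f U j) = 1.
Proof.
move=> HU; elim=> [|j IH] Hj /=.
  by rewrite dot_unitary ?dot_init //; apply: HU.
rewrite dot_unitary; last by apply: HU.
by rewrite dot_unitary ?IH ?(ltnW Hj) //; apply: unitary_oracle.
Qed.

Lemma adversary (U : nat -> op B) t (W : T -> T -> R) (alpha beta lam : R) :
  (forall i, (i <= t)%N -> unitary (U i)) ->
  (forall f g, 0 <= W f g) ->
  0 < \sum_f \sum_g W f g ->
  (forall f g, 0 < W f g -> dot (run f U t) (run g U t) <= 1 - 1 / 32) ->
  (forall f (b : B), \sum_g W f g * (Dif f g b)%:R <= alpha * \sum_g W f g) ->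
  (forall g (b : B), \sum_f W f g * (Dif f g b)%:R <= beta * \sum_f W f g) ->
  0 < lam -> 1 / 32 <= t%:R * (lam * alpha + beta / lam).
Proof.
move=> HU HW0 HS Hfin HA HB Hl.
set S := \sum_f \sum_g W f g.
set c := lam * alpha + beta / lam.
pose Wj j := \sum_f \sum_g W f g * dot (run f U j) (run g U j).
have W0 : Wj 0%N = S.
  apply: eq_bigr => f _; apply: eq_bigr => g _ /=.
  by rewrite dot_unitary ?dot_init ?mulr1 //; apply: HU.
have Step : forall j, (j < t)%N -> Wj j - S * c <= Wj j.+1.
  move=> j Hj.
  pose P (f g : T) := \sum_(b | Dif f g b) normsq (run f U j b).
  pose Q (f g : T) := \sum_(b | Dif f g b) normsq (run g U j b).
  have E1 : Wj j.+1 = \sum_f \sum_g W f g *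
      dot (apply (oracle f) (run f U j)) (apply (oracle g) (run g U j)).
    apply: eq_bigr => f _; apply: eq_bigr => g _ /=.
    by rewrite dot_unitary //; apply: HU.
  have L1 : Wj j - \sum_f \sum_g W f g * (lam * P f g + Q f g / lam) <= Wj j.+1.
    rewrite E1 /Wj -sumrB ler_sum // => f _; rewrite -sumrB ler_sum // => g _.
    rewrite -mulrBr ler_wpM2l //; exact: oracle_step.
  have SP : \sum_f \sum_g W f g * P f g <= alpha * S.
    rewrite /S mulr_sumr; apply: ler_sum => f _.
    have E : \sum_g W f g * P f g = \sum_b normsq (run f U j b) * \sum_g W f g * (Dif f g b)%:R.
      rewrite /P; under eq_bigr do rewrite big_mkcond mulr_sumr.
      rewrite exchange_big /=; apply: eq_bigr => b _.
      rewrite mulr_sumr; apply: eq_bigr => g _.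
      by case: (Dif f g b); rewrite ?mulr1 ?mulr0 ?mul0r // mulrC.
    rewrite E; apply: le_trans (_ : \sum_b normsq (run f U j b) * (alpha * \sum_g W f g) <= _).
      by apply: ler_sum => b _; rewrite ler_wpM2l ?normsq_ge0 ?HA.
    rewrite -mulr_suml.
    have -> : \sum_b normsq (run f U j b) = 1.
      rewrite -(run_norm f HU (ltnW Hj)); apply: eq_bigr => b _; by rewrite dotcc.
    by rewrite mul1r.
  have SQ : \sum_f \sum_g W f g * Q f g <= beta * S.
    rewrite /S exchange_big [X in _ <= _ * X]exchange_big mulr_sumr; apply: ler_sum => g _ /=.
    have E : \sum_f W f g * Q f g = \sum_b normsq (run g U j b) * \sum_f W f g * (Dif f g b)%:R.
      rewrite /Q; under eq_bigr do rewrite big_mkcond mulr_sumr.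
      rewrite exchange_big /=; apply: eq_bigr => b _.
      rewrite mulr_sumr; apply: eq_bigr => f _.
      by case: (Dif f g b); rewrite ?mulr1 ?mulr0 ?mul0r // mulrC.
    rewrite E; apply: le_trans (_ : \sum_b normsq (run g U j b) * (beta * \sum_f W f g) <= _).
      by apply: ler_sum => b _; rewrite ler_wpM2l ?normsq_ge0 ?HB.
    rewrite -mulr_suml.
    have -> : \sum_b normsq (run g U j b) = 1.
      rewrite -(run_norm g HU (ltnW Hj)); apply: eq_bigr => b _; by rewrite dotcc.
    by rewrite mul1r.
  have EPQ : \sum_f \sum_g W f g * (lam * P f g + Q f g / lam) =
     lam * (\sum_f \sum_g W f g * P f g) + (\sum_f \sum_g W f g * Q f g) / lam.
    rewrite mulr_sumr mulr_suml -big_split /=; apply: eq_bigr => f _.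
    rewrite mulr_sumr mulr_suml -big_split /=; apply: eq_bigr => g _.
    by rewrite mulrDr mulrCA -mulrA.
  apply: le_trans L1; rewrite lerD2l lerN2 EPQ.
  have Hl1 : 0 < lam^-1 by rewrite invr_gt0.
  rewrite /c mulrDr; apply: lerD.
    by rewrite [S * _]mulrC -mulrA ler_wpM2l ?(ltW Hl).
  by rewrite mulrA [S * beta]mulrC ler_wpM2r ?(ltW Hl1).
have Ind : forall j, (j <= t)%N -> S - j%:R * (S * c) <= Wj j.
  elim=> [|j IH] Hj; first by rewrite W0 mul0r subr0.
  apply: le_trans (Step j Hj); rewrite -natr1 mulrDl mul1r opprD addrA lerD2r.
  exact: IH (ltnW Hj).
have Fin : Wj t <= S * (1 - 1 / 32).
  rewrite /S mulr_suml; apply: ler_sum => f _; rewrite mulr_suml; apply: ler_sum => g _.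
  have := HW0 f g; rewrite le0r => /orP [/eqP ->|Hp]; first by rewrite !mul0r.
  by apply: ler_wpM2l; [exact: ltW | exact: Hfin].
have := le_trans (Ind t (leqnn t)) Fin.
move=> H.
have H2 : S * (1 / 32) <= S * (t%:R * c) by rewrite mulrCA; lra.
by rewrite -(ler_pM2l HS).
Qed.
End Adversary.



Section Comb.
Variables (n m k : nat) (ys : {ffun 'I_k -> bits m}) (z : bits m).
Hypothesis ys_inj : injective ys.
Hypothesis ys_z : forall i, ys i != z.
Local Notation T := {ffun bits n -> bits m}.
Local Notation P := {ffun 'I_k -> bits n}.

Definition mk (p : P) (o : option 'I_k) : T :=
  [ffun x => if [pick i | (p i == x) && (Some i != o)] is Some i then ys i else z].

Definition upd (h : T) (x0 : bits n) (v : bits m) : T :=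
  [ffun y => if y == x0 then v else h y].

Lemma mkE (p : P) o i : injective p -> mk p o (p i) = if Some i != o then ys i else z.
Proof.
move=> Hp; rewrite ffunE; case: pickP => [i' /andP [/eqP /Hp -> ->] //|H].
by have := H i; rewrite eqxx /= => ->.
Qed.

Lemma mk_out (p : P) o x : (forall i, p i != x) -> mk p o x = z.
Proof.
move=> Hx; rewrite ffunE; case: pickP => [i' /andP [Hi _]|//].
by have := Hx i'; rewrite Hi.
Qed.

Lemma mk_cases (p : P) o x : injective p ->
  (exists i, x = p i /\ mk p o x = if Some i != o then ys i else z) \/ mk p o x = z /\ forall i, p i != x.
Proof.
move=> Hp; case: (pickP (fun i => p i == x)) => [i /eqP <-|H].
  by left; exists i; split => //; rewrite mkE.
by right; split; [apply: mk_out|] => i; rewrite H.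
Qed.

Lemma in_image_mk (p : P) o i : injective p -> in_image (mk p o) (ys i) = (Some i != o).
Proof.
move=> Hp; apply/existsP/idP => [[x /eqP]|Hi].
  case: (mk_cases o x Hp) => [[i' [-> ->]]|[-> _]].
    by case: ifP => [H /ys_inj <- //|_ /esym/eqP]; rewrite (negbTE (ys_z i)).
  by move/esym/eqP; rewrite (negbTE (ys_z i)).
by exists (p i); rewrite mkE // Hi.
Qed.

Lemma mk_upd (p : P) j : injective p -> mk p (Some j) = upd (mk p None) (p j) z.
Proof.
move=> Hp; apply/ffunP => x; rewrite [RHS]ffunE.
case: eqP => [->|Hx]; first by rewrite mkE // eqxx.
case: (mk_cases (Some j) x Hp) => [[i [Ex ->]]|[-> Hi]].
  rewrite Ex mkE //=; case: eqP => [[Eij]|//]; by case: Hx; rewrite Ex Eij.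
by rewrite mk_out.
Qed.

Lemma mk_upd2 (p : P) j : injective p -> mk p None = upd (mk p (Some j)) (p j) (ys j).
Proof.
move=> Hp; apply/ffunP => x; rewrite [RHS]ffunE.
case: eqP => [->|Hx]; first by rewrite mkE.
by rewrite (mk_upd j Hp) [RHS]ffunE (introF eqP Hx).
Qed.

Lemma Dif_upd d w (h : T) x0 v (b : basis n m d w) :
  Dif h (upd h x0 v) b || Dif (upd h x0 v) h b -> exists l, tnth b.1.1 l = x0.
Proof.
rewrite /Dif eq_sym orbb => H.
suff: [exists l, tnth b.1.1 l == x0] by move/existsP => [l /eqP]; exists l.
apply: contraLR H => /existsPn H; rewrite negbK.
apply/eqP; apply: eq_from_tnth => l; rewrite !tnth_mktuple ffunE.
by have := H l; case: eqP.
Qed.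

Definition rel (f g : T) : bool :=
  [exists p : P, injectiveb p && [exists j, (f == mk p None) && (g == mk p (Some j))]].

Lemma relP (f g : T) : reflect (exists (p : P) j, [/\ injective p, f = mk p None & g = mk p (Some j)]) (rel f g).
Proof.
apply: (iffP existsP) => [[p /andP [/injectiveP Hp /existsP [j /andP [/eqP -> /eqP ->]]]]|[p [j [Hp -> ->]]]].
  by exists p, j.
by exists p; rewrite (introT (injectiveP _) Hp) /=; apply/existsP; exists j; rewrite !eqxx.
Qed.

Lemma rel_yes f g : rel f g -> forall i, in_image f (ys i).
Proof. by case/relP => p [j [Hp -> _]] i; rewrite in_image_mk. Qed.

Lemma rel_no f g : rel f g -> #|[set i | in_image g (ys i)]| = k.-1.
Proof.
case/relP => p [j [Hp _ ->]].
have -> : [set i | in_image (mk p (Some j)) (ys i)] = [set~ j].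
  by apply/setP => i; rewrite !inE in_image_mk //; congr negb; apply/eqP/eqP => [[]|->].
by rewrite cardsC1 card_ord.
Qed.

Lemma mk_None_inj (p p' : P) : injective p -> injective p' -> mk p None = mk p' None -> p = p'.
Proof.
move=> Hp Hp' E; apply/ffunP => i.
have := mkE None i Hp; rewrite E /=.
case: (mk_cases None (p i) Hp') => [[i' [-> ->]] /= /ys_inj -> //|[-> _] /esym/eqP].
by rewrite (negbTE (ys_z i)).
Qed.

Lemma mkSome_inj (p : P) : injective p -> injective (fun j => mk p (Some j)).
Proof.
move=> Hp j j' /= E; have := mkE (Some j) j Hp; rewrite E mkE //= eqxx /=.
case: eqP => [[]//|_] /eqP; by rewrite (negbTE (ys_z j)).
Qed.

Lemma rel_f_set (f : T) (p : P) : injective p -> f = mk p None ->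
  [set g | rel f g] = [set mk p (Some j) | j : 'I_k].
Proof.
move=> Hp Ef; apply/setP => g; rewrite inE; apply/relP/imsetP.
  move=> [p' [j [Hp' Ef' ->]]]; exists j => //.
  by rewrite (mk_None_inj Hp' Hp) // -Ef' -Ef.
by move=> [j _ ->]; exists p, j.
Qed.

Lemma card_rel_f (f g0 : T) : rel f g0 -> #|[set g | rel f g]| = k.
Proof.
case/relP => p [j [Hp Ef _]].
rewrite (rel_f_set Hp Ef) card_imset ?card_ord //; exact: mkSome_inj.
Qed.

Lemma cardA d w (f : T) (b : basis n m d w) : (#|[set g | rel f g && Dif f g b]| <= minn d k)%N.
Proof.
rewrite leq_min; apply/andP; split.
  apply: leq_trans (_ : #|[set upd f (tnth b.1.1 l) z | l : 'I_d]| <= d)%N; last first.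
    by rewrite (leq_trans (leq_imset_card _ _)) ?card_ord.
  apply: subset_leq_card; apply/subsetP => g; rewrite inE => /andP [/relP [p [j [Hp Ef Eg]]] HD].
  have Eu : g = upd f (p j) z by rewrite Eg Ef mk_upd.
  have := @Dif_upd d w f (p j) z b; rewrite -Eu HD /= => /(_ isT) [l Hl].
  by apply/imsetP; exists l => //; rewrite Hl.
case: (set_0Vmem [set g | rel f g && Dif f g b]) => [->|[g0]]; first by rewrite cards0.
rewrite inE => /andP [H0 _]; rewrite -(card_rel_f H0); apply: subset_leq_card.
by apply/subsetP => g; rewrite !inE => /andP [].
Qed.

Lemma cardB d w (g : T) (b : basis n m d w) : (#|[set f | rel f g && Dif f g b]| <= d)%N.
Proof.
case: (set_0Vmem [set f | rel f g && Dif f g b]) => [->|[f0]]; first by rewrite cards0.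
rewrite inE => /andP [/relP [p [j [Hp Ef0 Eg]]] _].
apply: leq_trans (_ : #|[set upd g (tnth b.1.1 l) (ys j) | l : 'I_d]| <= d)%N; last first.
  by rewrite (leq_trans (leq_imset_card _ _)) ?card_ord.
apply: subset_leq_card; apply/subsetP => f; rewrite inE => /andP [/relP [p' [j' [Hp' Ef Eg']]] HD].
have Ejj : j' = j.
  have := in_image_mk (Some j) j Hp; rewrite -Eg Eg' in_image_mk // eqxx /=.
  by case: eqP => // -[].
have Eu : f = upd g (p' j) (ys j) by rewrite Ef Eg' Ejj (mk_upd2 j Hp').
have := @Dif_upd d w g (p' j) (ys j) b; rewrite -Eu HD orbT => /(_ isT) [l Hl].
by apply/imsetP; exists l => //; rewrite Hl.
Qed.

Lemma cardB_big (g f0 : T) : rel f0 g -> (#|{: bits n}| - k.-1 <= #|[set f | rel f g]|)%N.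
Proof.
case/relP => p [j [Hp _ Eg]].
pose E := [set x | [forall i, (i != j) ==> (p i != x)]].
have HE : (#|{: bits n}| - k.-1 <= #|E|)%N.
  have : (#|~: E| <= k.-1)%N.
    apply: leq_trans (_ : #|p @: [set~ j]| <= _)%N; last first.
      by rewrite (leq_trans (leq_imset_card _ _)) // cardsC1 card_ord.
    apply: subset_leq_card; apply/subsetP => x; rewrite !inE.
    case/forallPn => i; rewrite negb_imply negbK => /andP [Hij /eqP <-].
    by apply/imsetP; exists i; rewrite // !inE.
  have H1 : (#|E| + #|~: E|)%N = #|{: bits n}| := cardsC E; lia.
pose ps x : P := [ffun i => if i == j then x else p i].
have psj : forall x, ps x j = x by move=> x; rewrite ffunE eqxx.
have psi : forall x i, i != j -> ps x i = p i by move=> x i Hij; rewrite ffunE (negbTE Hij).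
have Hps : forall x, x \in E -> injective (ps x).
  move=> x; rewrite inE => /forallP HE' i1 i2.
  case: (eqVneq i1 j) => [->|H1]; case: (eqVneq i2 j) => [->|H2] //.
  - rewrite psj psi // => Ex; by have := HE' i2; rewrite H2 Ex eqxx.
  - rewrite psj psi // => Ex; by have := HE' i1; rewrite H1 Ex eqxx.
  - by rewrite !psi // => /Hp.
have HF : forall x, x \in E -> rel (mk (ps x) None) g.
  move=> x Hx; apply/relP; exists (ps x), j; split => //; first exact: Hps.
  rewrite Eg; apply/ffunP => y; rewrite !ffunE.
  rewrite (@eq_pick _ _ [pred i | (ps x i == y) && (Some i != Some j)]) //.
  move=> i /=; case: (eqVneq i j) => [->|Hij]; first by rewrite eqxx !andbF.
  by rewrite psi.
have Finj : {in E &, injective (fun x => mk (ps x) None)}.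
  move=> x x' Hx Hx' /= E'; apply/eqP; apply: contraT => Hne.
  have H1 : mk (ps x) None x = ys j by have := mkE None j (Hps x Hx); rewrite psj.
  have H2 : mk (ps x') None x = z.
    apply: mk_out => i; case: (eqVneq i j) => [->|Hij]; first by rewrite psj eq_sym.
    rewrite psi //; move: Hx; rewrite inE => /forallP /(_ i); by rewrite Hij.
  by rewrite E' H2 in H1; have := ys_z j; rewrite H1 eqxx.
apply: leq_trans HE _; rewrite -(card_in_imset Finj); apply: subset_leq_card.
by apply/subsetP => f /imsetP [x Hx ->]; rewrite inE; exact: HF.
Qed.
End Comb.



Lemma sum_indic (T : finType) (P : pred T) : \sum_x ((P x)%:R : R) = #|[set x | P x]|%:R.
Proof.
rewrite cardsE -sum1_card natr_sum [RHS]big_mkcond /=; apply: eq_bigr => x _.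
by rewrite unfold_in; case: (P x).
Qed.

Lemma card_bits n : #|{: bits n}| = (2 ^ n)%N.
Proof. by rewrite card_tuple card_bool. Qed.

Lemma exists_inj (T : finType) k : (k <= #|T|)%N -> exists p : {ffun 'I_k -> T}, injective p.
Proof.
move=> Hk; exists [ffun i => enum_val (widen_ord Hk i)] => i j; rewrite !ffunE.
move=> H; apply: val_inj; have := congr1 val (enum_val_inj H); by [].
Qed.

Lemma sqrt_bound (X t : R) : 0 <= X -> 0 <= t -> X <= 16384 * t ^+ 2 ->
  1 / 128 * Num.sqrt X <= t.
Proof.
move=> HX Ht H.
have E : Num.sqrt ((128 * t) ^+ 2) = 128 * t by rewrite sqrtr_sqr ger0_norm ?mulr_ge0.
have L : Num.sqrt X <= Num.sqrt ((128 * t) ^+ 2).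
  rewrite ler_sqrt ?sqr_ge0 //; rewrite exprMn; lra.
rewrite E in L; lra.
Qed.

Theorem theorem1 :
  exists c : R, 0 < c /\
  exists N0 : nat,
  forall n m d k : nat,
    (0 < n)%N -> (0 < m)%N -> (0 < d)%N -> (0 < k)%N ->
    (k <= 2 ^ (m - 1))%N ->
    (N0 <= 2 ^ n)%N -> (d * d <= 2 ^ n)%N -> (k * k <= 2 ^ n)%N ->
  forall (w t : nat)
         (U : {ffun 'I_k -> bits m} -> nat -> op (basis n m d w))
         (out : {ffun 'I_k -> bits m} -> pred (basis n m d w)),
    (forall ys : {ffun 'I_k -> bits m}, injective ys ->
       forall i : nat, (i <= t)%N -> unitary (U ys i)) ->
    (forall (ys : {ffun 'I_k -> bits m}) (f : bits n -> bits m), injective ys ->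
       (forall i : 'I_k, in_image f (ys i)) ->
       3 / 4 <= acc_prob f (U ys) t (out ys)) ->
    (forall (ys : {ffun 'I_k -> bits m}) (f : bits n -> bits m), injective ys ->
       #|[set i : 'I_k | in_image f (ys i)]| = k.-1 ->
       acc_prob f (U ys) t (out ys) <= 1 / 4) ->
    c * Num.sqrt ((2 ^ n * k)%:R / (d * minn d k)%:R) <= t%:R.
Proof.
exists (1 / 128); split; first by lra.
exists 0%N => n m d k Hn Hm Hd Hk Hkm _ Hdd Hkk w t U out HU Hyes Hno.
have Hkm' : (k.+1 <= #|{: bits m}|)%N.
  rewrite card_bits; have : (2 ^ m = 2 * 2 ^ (m - 1))%N by rewrite -expnS subn1 prednK.
  have : (0 < 2 ^ (m - 1))%N by rewrite expn_gt0.
  lia.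
have [ysz Hysz] := exists_inj Hkm'.
pose ys : {ffun 'I_k -> bits m} := [ffun i : 'I_k => ysz (widen_ord (leqnSn k) i)].
pose z := ysz ord_max.
have ys_inj : injective ys.
  move=> i j; rewrite !ffunE => /Hysz /(congr1 val) /= H; exact: val_inj.
have ys_z : forall i, ys i != z.
  move=> i; rewrite ffunE; apply/negP => /eqP /Hysz /(congr1 val) /= Hi.
  by have := ltn_ord i; rewrite Hi ltnn.
have Hkn : (k <= #|{: bits n}|)%N.
  by rewrite card_bits (leq_trans _ Hkk) // leq_pmull.
have [p0 Hp0] := exists_inj Hkn.
pose j0 : 'I_k := Ordinal Hk.
pose W (f g : {ffun bits n -> bits m}) : R := (rel ys z f g)%:R.
pose M := (2 ^ n - k.-1)%N.
have HM : (2 ^ n <= 2 * M)%N.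
  have : (2 * k <= k * k + 1)%N by nia.
  rewrite /M; lia.
have HM0 : (0 < M)%N by rewrite /M; have := expn_gt0 2 n; lia.
pose mn := minn d k.
have Hmn : (0 < mn)%N by rewrite /mn leq_min Hd Hk.
pose alpha : R := mn%:R / k%:R.
pose beta : R := d%:R / M%:R.
have Hadv : forall lam, 0 < lam -> 1 / 32 <= t%:R * (lam * alpha + beta / lam).
  move=> lam Hl; apply: (@adversary n m d w (U ys) t W alpha beta lam) => //.
  - exact: HU ys ys_inj.
  - have Hr : rel ys z (mk ys z p0 None) (mk ys z p0 (Some j0)).
      by apply/relP; exists p0, j0.
    rewrite (bigD1 (mk ys z p0 None)) //= (bigD1 (mk ys z p0 (Some j0))) //= {1}/W Hr.
    have H1 : 0 <= \sum_(g | g != mk ys z p0 (Some j0)) W (mk ys z p0 None) g.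
      by apply: sumr_ge0 => g _; rewrite /W ler0n.
    have H2 : 0 <= \sum_(f | f != mk ys z p0 None) \sum_g W f g.
      by apply: sumr_ge0 => f _; apply: sumr_ge0 => g _; rewrite /W ler0n.
    rewrite /= (_ : true%:R = 1) //; lra.
  - move=> f g; rewrite /W; case Hr: (rel ys z f g); last by rewrite ltxx.
    move=> _; apply: (final_sep (out := out ys)).
    + exact: (run_norm f (HU ys ys_inj) (leqnn t)).
    + exact: (run_norm g (HU ys ys_inj) (leqnn t)).
    + by apply: Hyes => //; apply: (rel_yes ys_inj ys_z Hr).
    + by apply: Hno => //; apply: (rel_no ys_inj ys_z Hr).
  - move=> f b; rewrite /W.
    under eq_bigr do rewrite -natrM mulnb.
    rewrite !sum_indic.
    case: (set_0Vmem [set g | rel ys z f g]) => [E0|[g0]].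
      have : [set g | rel ys z f g && Dif f g b] = set0.
        apply/setP => g; move/setP: E0 => /(_ g); rewrite !inE.
        by case: (rel ys z f g).
      by move=> ->; rewrite E0 cards0 mulr0.
    rewrite inE => Hg0; rewrite (card_rel_f ys_inj ys_z Hg0) /alpha.
    have Hk0 : k%:R != 0 :> R by rewrite pnatr_eq0 -lt0n.
    rewrite mulfVK // ler_nat; exact: cardA.
  - move=> g b; rewrite /W.
    under eq_bigr do rewrite -natrM mulnb.
    rewrite !sum_indic.
    case: (set_0Vmem [set f | rel ys z f g]) => [E0|[f0]].
      have : [set f | rel ys z f g && Dif f g b] = set0.
        apply/setP => f; move/setP: E0 => /(_ f); rewrite !inE.
        by case: (rel ys z f g).
      by move=> ->; rewrite E0 cards0 mulr0.
    rewrite inE => Hf0.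
    have HB1 := cardB ys_inj ys_z g b.
    have HB2 := cardB_big ys_z Hf0; rewrite card_bits -/M in HB2.
    have HM0' : M%:R != 0 :> R by rewrite pnatr_eq0 -lt0n.
    apply: le_trans (_ : (d%:R : R) <= _); first by rewrite ler_nat.
    rewrite /beta -{1}(mulfVK HM0' d%:R) ler_wpM2l ?divr_ge0 ?ler0n // ler_nat.
    exact: HB2.
have Ht : (0 < t)%N.
  case: (posnP t) => [Et|//]; have := Hadv 1 ltr01; rewrite Et mul0r; lra.
have Hkr : 0 < k%:R :> R by rewrite ltr0n.
have Hdr : 0 < d%:R :> R by rewrite ltr0n.
have Hmr : 0 < mn%:R :> R by rewrite ltr0n.
have HMr : 0 < M%:R :> R by rewrite ltr0n.
have Htr : 0 < t%:R :> R by rewrite ltr0n.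
have Ha : 0 < alpha by rewrite divr_gt0.
have Hb : 0 < beta by rewrite divr_gt0.
have H64 : 0 < 64 * t%:R * alpha :> R by apply: mulr_gt0 => //; apply: mulr_gt0.
have Hlam : 0 < (64 * t%:R * alpha)^-1 by rewrite invr_gt0.
have := Hadv _ Hlam.
have -> : t%:R * ((64 * t%:R * alpha)^-1 * alpha + beta / (64 * t%:R * alpha)^-1)
    = 1 / 64 + 64 * (t%:R ^+ 2 * mn%:R * d%:R / (k%:R * M%:R)).
  rewrite /alpha /beta; field.
  by rewrite !pnatr_eq0 -!lt0n Hk HM0 Hmn Ht.
move=> H.
have H1 : 1 / 4096 <= t%:R ^+ 2 * mn%:R * d%:R / (k%:R * M%:R) :> R by lra.
rewrite ler_pdivlMr ?mulr_gt0 // in H1.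
have HN : (2 ^ n)%:R <= 2 * M%:R :> R by rewrite -natrM ler_nat.
apply: sqrt_bound; first by rewrite divr_ge0 ?ler0n.
  exact: ltW.
rewrite ler_pdivrMr; last by rewrite ltr0n muln_gt0 Hd Hmn.
rewrite !natrM.
set A := t%:R ^+ 2 * mn%:R * d%:R in H1 *.
have E : 16384 * t%:R ^+ 2 * (d%:R * mn%:R) = 16384 * A :> R by rewrite /A; ring.
rewrite E.
have HNk : (2 ^ n)%:R * k%:R <= 2 * M%:R * k%:R :> R by rewrite ler_pM2r.
have E2 : 2 * M%:R * k%:R = 2 * (k%:R * M%:R) :> R by ring.
have HkM : 0 <= k%:R * M%:R :> R by rewrite mulr_ge0 // ltW.
lra.
Qed.
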